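(* For every $\gamma\in\mathbb R$ there exists a solution $(X,Y,Z,W)$ of system (S), defined on an interval containing $(-\infty,0]$, such that: (1) $Y(t)>0$ for all $t$; (2) $e^{-2t}|(X,Z,W)(t)-(0,1,0)|$ is bounded as $t\to-\infty$; (3) $e^{-t}|Y(t)|$ is bounded as $t\to-\infty$; (4) $\lim_{t\to-\infty}W/Y^2=1$; (5) $\lim_{t\to-\infty}(1-Z)/Y^2=\gamma$.
   Context: Fix a positive integer $d$ and $q\in\mathbb R$. Put $A_2=d(d+2)$ and $A_3=\tfrac14d(d+2)^2q^2$. System (S) is $$X'=X(dX^2+Z^2-1)+\tfrac{A_2}{d}Y^2-2\tfrac{A_3}{d}W^2,\qquad Y'=Y(dX^2+Z^2-X),$$ $$Z'=Z(dX^2+Z^2-1)+A_3W^2,\qquad W'=W(dX^2+Z^2-2X+Z).$$ *)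

(* Defs.v *)
From Stdlib Require Import Reals Lra.
Open Scope R_scope.

Definition A2 (d : nat) : R := INR d * (INR d + 2).
Definition A3 (d : nat) (q : R) : R := / 4 * INR d * (INR d + 2) ^ 2 * q ^ 2.

Definition FX (d : nat) (q X Y Z W : R) : R :=
  X * (INR d * X ^ 2 + Z ^ 2 - 1) + A2 d / INR d * Y ^ 2 - 2 * (A3 d q / INR d) * W ^ 2.
Definition FY (d : nat) (X Y Z : R) : R := Y * (INR d * X ^ 2 + Z ^ 2 - X).
Definition FZ (d : nat) (q X Z W : R) : R :=
  Z * (INR d * X ^ 2 + Z ^ 2 - 1) + A3 d q * W ^ 2.
Definition FW (d : nat) (X Z W : R) : R := W * (INR d * X ^ 2 + Z ^ 2 - 2 * X + Z).

Definition solves_S (d : nat) (q T : R) (X Y Z W : R -> R) : Prop :=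
  forall t, t < T ->
    derivable_pt_lim X t (FX d q (X t) (Y t) (Z t) (W t)) /\
    derivable_pt_lim Y t (FY d (X t) (Y t) (Z t)) /\
    derivable_pt_lim Z t (FZ d q (X t) (Z t) (W t)) /\
    derivable_pt_lim W t (FW d (X t) (Z t) (W t)).

Definition bounded_at_minus_infty (f : R -> R) : Prop :=
  exists C t0, forall t, t <= t0 -> Rabs (f t) <= C.

Definition limit_at_minus_infty (f : R -> R) (l : R) : Prop :=
  forall eps, 0 < eps -> exists M, forall t, t <= M -> Rabs (f t - l) < eps.

(* Main.v *)
Require Import Defs.
From Stdlib Require Import Reals.
From Coquelicot Require Import Coquelicot.
From Stdlib Require Import Reals Lra Lia Psatz.
Open Scope R_scope.

Lemma sum_rev (f : nat -> R) (k : nat) :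
  sum_f_R0 (fun i => f (k - i)%nat) k = sum_f_R0 f k.
Proof.
  induction k as [|k IH].
  - simpl. reflexivity.
  - rewrite decomp_sum by lia. simpl pred.
    replace (sum_f_R0 (fun i : nat => f (S k - S i)%nat) k)
      with (sum_f_R0 (fun i : nat => f (k - i)%nat) k) by (apply sum_eq; intros; reflexivity).
    rewrite IH, tech5. replace (S k - 0)%nat with (S k) by lia. lra.
Qed.

Lemma H2_bound (k : nat) :
  sum_f_R0 (fun i => / (INR i + 1) ^ 2) k <= 2 - / (INR k + 1).
Proof.
  induction k as [|k IH].
  - simpl. lra.
  - rewrite tech5. rewrite S_INR.
    assert (0 <= INR k) by apply pos_INR.
    assert (/ (INR k + 1 + 1) ^ 2 + / (INR k + 1 + 1) <= / (INR k + 1)).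
    { assert (h1 : 0 < INR k + 1) by lra. assert (h2 : 0 < INR k + 1 + 1) by lra.
      apply Rmult_le_reg_r with ((INR k + 1) * (INR k + 1 + 1) ^ 2).
      { apply Rmult_lt_0_compat; [lra| apply pow_lt; lra]. }
      rewrite Rmult_plus_distr_r.
      replace (/ (INR k + 1 + 1) ^ 2 * ((INR k + 1) * (INR k + 1 + 1) ^ 2)) with (INR k + 1) by (field; lra).
      replace (/ (INR k + 1 + 1) * ((INR k + 1) * (INR k + 1 + 1) ^ 2)) with ((INR k + 1) * (INR k + 1 + 1)) by (field; lra).
      replace (/ (INR k + 1) * ((INR k + 1) * (INR k + 1 + 1) ^ 2)) with ((INR k + 1 + 1)^2) by (field; lra).
      nra. }
    lra.
Qed.

Definition mm (M : R) (k : nat) : R := M ^ k / (INR k + 1) ^ 2.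

Lemma mm_pos M k : 0 <= M -> 0 <= mm M k.
Proof.
  intros. unfold mm. assert (0 <= INR k) by apply pos_INR.
  apply Rmult_le_pos; [apply pow_le; lra| left; apply Rinv_0_lt_compat, pow_lt; lra].
Qed.

Lemma term_bound (a b : R) : 0 < a -> 0 < b ->
  / (a ^ 2 * b ^ 2) <= 2 * (/ a ^ 2 + / b ^ 2) / (a + b) ^ 2.
Proof.
  intros. 
  apply Rmult_le_reg_r with (a^2 * b^2 * (a+b)^2).
  { repeat apply Rmult_lt_0_compat; try apply pow_lt; lra. }
  replace (/ (a ^ 2 * b ^ 2) * (a ^ 2 * b ^ 2 * (a + b) ^ 2)) with ((a+b)^2) by (field; lra).
  replace (2 * (/ a ^ 2 + / b ^ 2) / (a + b) ^ 2 * (a ^ 2 * b ^ 2 * (a + b) ^ 2))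
    with (2 * (b^2 + a^2)) by (field; lra).
  assert (0 <= (a-b)^2) by apply pow2_ge_0. 
  replace ((a+b)^2) with (2*(b^2+a^2) - (a-b)^2) by ring. lra.
Qed.

Lemma sum_scal_l (f : nat -> R) c n : sum_f_R0 (fun i => c * f i) n = c * sum_f_R0 f n.
Proof. rewrite scal_sum. apply sum_eq. intros; ring. Qed.

Lemma conv_mm (M : R) (k : nat) : 0 <= M ->
  sum_f_R0 (fun i => mm M i * mm M (k - i)) k <= 8 * mm M k.
Proof.
  intros HM.
  assert (hk : 0 <= INR k) by apply pos_INR.
  set (c := M ^ k * (2 / (INR k + 2) ^ 2)).
  assert (hc : 0 <= c).
  { unfold c. apply Rmult_le_pos; [apply pow_le; lra|].
    apply Rmult_le_pos; [lra| left; apply Rinv_0_lt_compat, pow_lt; lra]. }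
  apply Rle_trans with
    (sum_f_R0 (fun i => c * (/ (INR i + 1) ^ 2) + c * (/ (INR (k - i) + 1) ^ 2)) k).
  { apply sum_Rle. intros i Hi.
    assert (0 <= INR i) by apply pos_INR.
    assert (0 <= INR (k - i)) by apply pos_INR.
    assert (E : mm M i * mm M (k - i) = M ^ k * / ((INR i + 1) ^ 2 * (INR (k - i) + 1) ^ 2)).
    { unfold mm. replace k with (i + (k - i))%nat at 3 by lia. rewrite pow_add. field. lra. }
    rewrite E.
    assert (T := term_bound (INR i + 1) (INR (k - i) + 1) ltac:(lra) ltac:(lra)).
    replace (INR i + 1 + (INR (k - i) + 1)) with (INR k + 2) in T
      by (rewrite minus_INR by lia; ring).
    unfold c.
    replace (M ^ k * (2 / (INR k + 2) ^ 2) * / (INR i + 1) ^ 2 +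
             M ^ k * (2 / (INR k + 2) ^ 2) * / (INR (k - i) + 1) ^ 2)
      with (M ^ k * (2 * (/ (INR i + 1) ^ 2 + / (INR (k - i) + 1) ^ 2) / (INR k + 2) ^ 2))
      by (field; lra).
    apply Rmult_le_compat_l; [apply pow_le; lra| exact T]. }
  rewrite plus_sum.
  rewrite !sum_scal_l.
  rewrite (sum_rev (fun j => / (INR j + 1) ^ 2)).
  assert (h2 := H2_bound k).
  assert (0 <= / (INR k + 1)) by (left; apply Rinv_0_lt_compat; lra).
  apply Rle_trans with (4 * c).
  { nra. }
  unfold c, mm.
  assert (0 <= M ^ k) by (apply pow_le; lra).
  replace (4 * (M ^ k * (2 / (INR k + 2) ^ 2))) with (M ^ k * (8 / (INR k + 2) ^ 2)) by (field; lra).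
  replace (8 * (M ^ k / (INR k + 1) ^ 2)) with (M ^ k * (8 / (INR k + 1) ^ 2)) by (field; lra).
  apply Rmult_le_compat_l; [lra|].
  unfold Rdiv. apply Rmult_le_compat_l; [lra|].
  apply Rinv_le_contravar; [apply pow_lt; lra|]. 
  apply pow_incr; lra.
Qed.

Definition sadd (a b : nat -> R) (n : nat) : R := a n + b n.
Definition sscal (c : R) (a : nat -> R) (n : nat) : R := c * a n.

Definition Bk (M : R) (k : nat) (a : nat -> R) (A : R) : Prop :=
  forall i, (i < k)%nat -> Rabs (a i) <= A * mm M i.
Definition G (M : R) (a : nat -> R) (A : R) : Prop :=
  forall i, Rabs (a i) <= A * mm M i.

Lemma p4 a b c d : 0 <= a -> 0 <= b -> 0 <= c -> 0 <= d -> 0 <= a * b * (c * d).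
Proof. intros. apply Rmult_le_pos; apply Rmult_le_pos; auto. Qed.

Lemma mult_core M a b A B k : 0 <= M -> 0 <= A * B ->
  (forall i, (i <= k)%nat -> Rabs (a i * b (k - i)%nat) <= A * B * (mm M i * mm M (k - i))) ->
  Rabs (PS_mult a b k) <= 8 * A * B * mm M k.
Proof.
  intros HM HAB H. unfold PS_mult.
  eapply Rle_trans; [apply sum_f_R0_triangle|].
  eapply Rle_trans; [apply sum_Rle; intros i Hi; apply (H i Hi)|].
  rewrite sum_scal_l.
  replace (8 * A * B * mm M k) with (A * B * (8 * mm M k)) by ring.
  apply Rmult_le_compat_l; [lra| apply conv_mm; lra].
Qed.

Lemma Bk_mult M k a b A B : 0 <= M -> 0 <= A -> 0 <= B -> a 0%nat = 0 -> b 0%nat = 0 ->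
  Bk M k a A -> Bk M k b B -> Bk M (S k) (PS_mult a b) (8 * A * B).
Proof.
  intros HM HA HB a0 b0 Ha Hb j Hj.
  apply mult_core; [lra| apply Rmult_le_pos; lra|].
  intros i Hi.
  assert (0 <= mm M i) by (apply mm_pos; lra).
  assert (0 <= mm M (j - i)) by (apply mm_pos; lra).
  destruct (Nat.eq_dec i 0) as [->|n0].
  { rewrite a0, Rmult_0_l, Rabs_R0. apply p4; try lra; apply mm_pos; lra. }
  destruct (Nat.eq_dec i j) as [->|n1].
  { rewrite Nat.sub_diag, b0, Rmult_0_r, Rabs_R0. apply p4; try lra; apply mm_pos; lra. }
  rewrite Rabs_mult.
  replace (A * B * (mm M i * mm M (j - i))) with ((A * mm M i) * (B * mm M (j - i))) by ring.
  apply Rmult_le_compat; try apply Rabs_pos.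
  - apply Ha; lia.
  - apply Hb; lia.
Qed.

Lemma G_mult M a b A B : 0 <= M -> 0 <= A -> 0 <= B ->
  G M a A -> G M b B -> G M (PS_mult a b) (8 * A * B).
Proof.
  intros HM HA HB Ha Hb j.
  apply mult_core; [lra| apply Rmult_le_pos; lra|].
  intros i Hi. rewrite Rabs_mult.
  replace (A * B * (mm M i * mm M (j - i))) with ((A * mm M i) * (B * mm M (j - i))) by ring.
  apply Rmult_le_compat; try apply Rabs_pos; auto.
Qed.

Lemma Bk_add M k a b A B : Bk M k a A -> Bk M k b B -> Bk M k (sadd a b) (A + B).
Proof.
  intros Ha Hb i Hi. unfold sadd. eapply Rle_trans; [apply Rabs_triang|].
  specialize (Ha i Hi); specialize (Hb i Hi). lra.
Qed.

Lemma G_add M a b A B : G M a A -> G M b B -> G M (sadd a b) (A + B).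
Proof.
  intros Ha Hb i. unfold sadd. eapply Rle_trans; [apply Rabs_triang|].
  specialize (Ha i); specialize (Hb i). lra.
Qed.

Lemma Bk_scal M k a A c : Bk M k a A -> Bk M k (sscal c a) (Rabs c * A).
Proof.
  intros Ha i Hi. unfold sscal. rewrite Rabs_mult, Rmult_assoc.
  apply Rmult_le_compat_l; [apply Rabs_pos| auto].
Qed.

Lemma G_scal M a A c : G M a A -> G M (sscal c a) (Rabs c * A).
Proof.
  intros Ha i. unfold sscal. rewrite Rabs_mult, Rmult_assoc.
  apply Rmult_le_compat_l; [apply Rabs_pos| auto].
Qed.

Lemma Bk_mono M k k' a A A' : 0 <= M -> (k' <= k)%nat -> A <= A' -> Bk M k a A -> Bk M k' a A'.
Proof.
  intros HM Hk HA Ha i Hi. eapply Rle_trans; [apply Ha; lia|].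
  apply Rmult_le_compat_r; [apply mm_pos; lra| lra].
Qed.

Lemma G_mono M a A A' : 0 <= M -> A <= A' -> G M a A -> G M a A'.
Proof.
  intros HM HA Ha i. eapply Rle_trans; [apply Ha|].
  apply Rmult_le_compat_r; [apply mm_pos; lra| lra].
Qed.

Lemma PS_mult_0 a b : a 0%nat = 0 -> PS_mult a b 0 = 0.
Proof. intros h. unfold PS_mult. simpl. rewrite h. ring. Qed.

Lemma PS_mult_1 a b : a 0%nat = 0 -> b 0%nat = 0 -> PS_mult a b 1 = 0.
Proof. intros h h'. unfold PS_mult. simpl. rewrite h, h'. ring. Qed.

Lemma PS_mult_2 a b : a 0%nat = 0 -> b 0%nat = 0 -> PS_mult a b 2 = a 1%nat * b 1%nat.
Proof. intros h h'. unfold PS_mult. simpl. rewrite h, h'. ring. Qed.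

Definition Qs dd (X Z : nat -> R) := sadd (sscal dd (PS_mult X X)) (PS_mult Z Z).
Definition NX dd c2 c3 (X Y Z W : nat -> R) :=
  sadd (PS_mult X (sadd (Qs dd X Z) (sscal 2 Z)))
       (sadd (sscal c2 (PS_mult Y Y)) (sscal (-c3) (PS_mult W W))).
Definition NY dd (X Y Z : nat -> R) :=
  PS_mult Y (sadd (sadd (Qs dd X Z) (sscal 2 Z)) (sscal (-1) X)).
Definition NZ dd a3 (X Z W : nat -> R) :=
  sadd (sadd (Qs dd X Z) (sscal 2 (PS_mult Z Z)))
       (sadd (PS_mult Z (Qs dd X Z)) (sscal a3 (PS_mult W W))).
Definition NW dd (X Z W : nat -> R) :=
  PS_mult W (sadd (sadd (Qs dd X Z) (sscal 3 Z)) (sscal (-2) X)).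

Record V4 := mk4 { vX : R; vY : R; vZ : R; vW : R }.

Definition step dd c2 c3 a3 g (f : nat -> V4) (k : nat) : V4 :=
  let X := fun i => vX (f i) in
  let Y := fun i => vY (f i) in
  let Z := fun i => vZ (f i) in
  let W := fun i => vW (f i) in
  mk4 (NX dd c2 c3 X Y Z W k / INR k)
      (if Nat.eqb k 1 then 1 else NY dd X Y Z k / (INR k - 1))
      (if Nat.eqb k 2 then - g else NZ dd a3 X Z W k / (INR k - 2))
      (if Nat.eqb k 2 then 1 else NW dd X Z W k / (INR k - 2)).

Fixpoint tab dd c2 c3 a3 g (n : nat) : nat -> V4 :=
  match n with
  | O => fun _ => mk4 0 0 0 0
  | S m => fun i => if Nat.eqb i (S m) then step dd c2 c3 a3 g (tab dd c2 c3 a3 g m) (S m)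
                    else tab dd c2 c3 a3 g m i
  end.

Definition coef dd c2 c3 a3 g (k : nat) : V4 := tab dd c2 c3 a3 g k k.

Lemma tab_coef dd c2 c3 a3 g n i : (i <= n)%nat -> tab dd c2 c3 a3 g n i = coef dd c2 c3 a3 g i.
Proof.
  induction n as [|n IH]; intros Hi.
  - assert (i = 0%nat) by lia. subst. reflexivity.
  - simpl. destruct (Nat.eqb i (S n)) eqn:E.
    + apply Nat.eqb_eq in E. subst. unfold coef. simpl. rewrite Nat.eqb_refl. reflexivity.
    + apply Nat.eqb_neq in E. apply IH. lia.
Qed.

Lemma coef0 dd c2 c3 a3 g : coef dd c2 c3 a3 g 0 = mk4 0 0 0 0.
Proof. reflexivity. Qed.

Definition E (k : nat) (a a' : nat -> R) := forall i, (i < k)%nat -> a i = a' i.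

Lemma E_mult k a b a' b' : a 0%nat = 0 -> b 0%nat = 0 -> a' 0%nat = 0 -> b' 0%nat = 0 ->
  E k a a' -> E k b b' -> E (S k) (PS_mult a b) (PS_mult a' b').
Proof.
  intros a0 b0 a'0 b'0 Ha Hb j Hj. unfold PS_mult. apply sum_eq. intros i Hi.
  destruct (Nat.eq_dec i 0) as [->|n0].
  { rewrite a0, a'0. ring. }
  destruct (Nat.eq_dec i j) as [->|n1].
  { rewrite Nat.sub_diag, b0, b'0. ring. }
  rewrite Ha, Hb by lia. reflexivity.
Qed.

Lemma E_add k a b a' b' : E k a a' -> E k b b' -> E k (sadd a b) (sadd a' b').
Proof. intros Ha Hb i Hi. unfold sadd. rewrite Ha, Hb; auto. Qed.

Lemma E_scal k c a a' : E k a a' -> E k (sscal c a) (sscal c a').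
Proof. intros Ha i Hi. unfold sscal. rewrite Ha; auto. Qed.

Lemma E_le k k' a a' : (k' <= k)%nat -> E k a a' -> E k' a a'.
Proof. intros H Ha i Hi. apply Ha. lia. Qed.

Lemma z_add a b : a 0%nat = 0 -> b 0%nat = 0 -> sadd a b 0%nat = 0.
Proof. unfold sadd. intros -> ->. ring. Qed.
Lemma z_scal c a : a 0%nat = 0 -> sscal c a 0%nat = 0.
Proof. unfold sscal. intros ->. ring. Qed.
Lemma z_mult a b : a 0%nat = 0 -> PS_mult a b 0%nat = 0.
Proof. apply PS_mult_0. Qed.

Ltac zt := repeat first [ apply z_add | apply z_scal | apply z_mult | assumption ].

Lemma Qs_z dd X Z : X 0%nat = 0 -> Z 0%nat = 0 -> Qs dd X Z 0%nat = 0.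
Proof. intros. unfold Qs. zt. Qed.

Lemma Qs_E dd k X Z X' Z' : X 0%nat = 0 -> Z 0%nat = 0 -> X' 0%nat = 0 -> Z' 0%nat = 0 ->
  E k X X' -> E k Z Z' -> E (S k) (Qs dd X Z) (Qs dd X' Z').
Proof.
  intros. unfold Qs. apply E_add; [apply E_scal|]; apply E_mult; auto.
Qed.


Lemma N_ext dd c2 c3 a3 k X Y Z W X' Y' Z' W' :
  X 0%nat = 0 -> Y 0%nat = 0 -> Z 0%nat = 0 -> W 0%nat = 0 ->
  X' 0%nat = 0 -> Y' 0%nat = 0 -> Z' 0%nat = 0 -> W' 0%nat = 0 ->
  E k X X' -> E k Y Y' -> E k Z Z' -> E k W W' ->
  NX dd c2 c3 X Y Z W k = NX dd c2 c3 X' Y' Z' W' k /\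
  NY dd X Y Z k = NY dd X' Y' Z' k /\
  NZ dd a3 X Z W k = NZ dd a3 X' Z' W' k /\
  NW dd X Z W k = NW dd X' Z' W' k.
Proof.
  intros.
  assert (HQ := Qs_E dd k X Z X' Z' H H1 H3 H5 H7 H9).
  assert (HQ' : E k (Qs dd X Z) (Qs dd X' Z')) by (eapply E_le; [|exact HQ]; lia).
  assert (q0 := Qs_z dd X Z H H1). assert (q0' := Qs_z dd X' Z' H3 H5).
  assert (e1 : E (S k) (NX dd c2 c3 X Y Z W) (NX dd c2 c3 X' Y' Z' W')).
  { unfold NX. apply E_add.
    - apply E_mult; zt. apply E_add; auto. apply E_scal; auto.
    - apply E_add; apply E_scal; apply E_mult; auto. }
  assert (e2 : E (S k) (NY dd X Y Z) (NY dd X' Y' Z')).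
  { unfold NY. apply E_mult; zt. apply E_add; [apply E_add|]; auto; apply E_scal; auto. }
  assert (e3 : E (S k) (NZ dd a3 X Z W) (NZ dd a3 X' Z' W')).
  { unfold NZ. apply E_add; [apply E_add|apply E_add].
    + exact HQ.
    + apply E_scal, E_mult; auto.
    + apply E_mult; auto.
    + apply E_scal, E_mult; auto. }
  assert (e4 : E (S k) (NW dd X Z W) (NW dd X' Z' W')).
  { unfold NW. apply E_mult; zt. apply E_add; [apply E_add|]; auto; apply E_scal; auto. }
  repeat split; [apply e1|apply e2|apply e3|apply e4]; lia.
Qed.

Definition cX dd c2 c3 a3 g i := vX (coef dd c2 c3 a3 g i).
Definition cY dd c2 c3 a3 g i := vY (coef dd c2 c3 a3 g i).
Definition cZ dd c2 c3 a3 g i := vZ (coef dd c2 c3 a3 g i).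
Definition cW dd c2 c3 a3 g i := vW (coef dd c2 c3 a3 g i).

Lemma coef_step dd c2 c3 a3 g k : (1 <= k)%nat ->
  coef dd c2 c3 a3 g k = step dd c2 c3 a3 g (coef dd c2 c3 a3 g) k.
Proof.
  intros Hk. destruct k as [|m]; [lia|].
  unfold coef at 1. simpl. rewrite Nat.eqb_refl.
  set (f := tab dd c2 c3 a3 g m).
  assert (Hf : forall i, (i < S m)%nat -> f i = coef dd c2 c3 a3 g i)
    by (intros; apply tab_coef; lia).
  assert (f0 : f 0%nat = mk4 0 0 0 0) by (rewrite Hf by lia; reflexivity).
  assert (c0 := coef0 dd c2 c3 a3 g).
  destruct (N_ext dd c2 c3 a3 (S m)
     (fun i => vX (f i)) (fun i => vY (f i)) (fun i => vZ (f i)) (fun i => vW (f i))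
     (fun i => vX (coef dd c2 c3 a3 g i)) (fun i => vY (coef dd c2 c3 a3 g i))
     (fun i => vZ (coef dd c2 c3 a3 g i)) (fun i => vW (coef dd c2 c3 a3 g i)))
    as (h1 & h2 & h3 & h4);
    try (simpl; rewrite ?f0, ?c0; reflexivity);
    try (intros i Hi; simpl; rewrite Hf; auto).
  unfold step. simpl in h1, h2, h3, h4. rewrite h1, h2, h3, h4. reflexivity.
Qed.


Lemma c_0 dd c2 c3 a3 g : cX dd c2 c3 a3 g 0 = 0 /\ cY dd c2 c3 a3 g 0 = 0 /\
  cZ dd c2 c3 a3 g 0 = 0 /\ cW dd c2 c3 a3 g 0 = 0.
Proof. repeat split; reflexivity. Qed.

Lemma rec_all dd c2 c3 a3 g k :
  let X := cX dd c2 c3 a3 g in let Y := cY dd c2 c3 a3 g in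
  let Z := cZ dd c2 c3 a3 g in let W := cW dd c2 c3 a3 g in
  (1 <= k)%nat ->
  X k = NX dd c2 c3 X Y Z W k / INR k /\
  Y k = (if Nat.eqb k 1 then 1 else NY dd X Y Z k / (INR k - 1)) /\
  Z k = (if Nat.eqb k 2 then - g else NZ dd a3 X Z W k / (INR k - 2)) /\
  W k = (if Nat.eqb k 2 then 1 else NW dd X Z W k / (INR k - 2)).
Proof.
  intros X Y Z W Hk. unfold X, Y, Z, W, cX, cY, cZ, cW.
  rewrite (coef_step dd c2 c3 a3 g k Hk). unfold step. simpl. repeat split; reflexivity.
Qed.

Lemma INR_ge1 k : (1 <= k)%nat -> 1 <= INR k.
Proof. intros. replace 1 with (INR 1) by reflexivity. apply le_INR; lia. Qed.

Lemma idents dd c2 c3 a3 g :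
  let X := cX dd c2 c3 a3 g in let Y := cY dd c2 c3 a3 g in
  let Z := cZ dd c2 c3 a3 g in let W := cW dd c2 c3 a3 g in
  (forall k, INR k * X k = NX dd c2 c3 X Y Z W k) /\
  (forall k, INR k * Y k = Y k + NY dd X Y Z k) /\
  (forall k, INR k * Z k = 2 * Z k + NZ dd a3 X Z W k) /\
  (forall k, INR k * W k = 2 * W k + NW dd X Z W k) /\
  Y 1%nat = 1 /\ Z 2%nat = - g /\ W 2%nat = 1 /\
  X 1%nat = 0 /\ Z 1%nat = 0 /\ W 1%nat = 0.
Proof.
  intros X Y Z W.
  destruct (c_0 dd c2 c3 a3 g) as (x0 & y0 & z0 & w0).
  fold X in x0; fold Y in y0; fold Z in z0; fold W in w0.
  assert (q0 := Qs_z dd X Z x0 z0).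
  assert (nx0 : NX dd c2 c3 X Y Z W 0%nat = 0) by (unfold NX; zt).
  assert (ny0 : NY dd X Y Z 0%nat = 0) by (unfold NY; zt).
  assert (nz0 : NZ dd a3 X Z W 0%nat = 0) by (unfold NZ; zt).
  assert (nw0 : NW dd X Z W 0%nat = 0) by (unfold NW; zt).
  assert (q1 : Qs dd X Z 1%nat = 0).
  { unfold Qs, sadd, sscal. rewrite !PS_mult_1 by auto. ring. }
  assert (nx1 : NX dd c2 c3 X Y Z W 1%nat = 0).
  { unfold NX, sadd, sscal. rewrite !PS_mult_1 by (rewrite ?q0, ?x0, ?y0, ?z0, ?w0; ring). ring. }
  assert (ny1 : NY dd X Y Z 1%nat = 0).
  { unfold NY. rewrite PS_mult_1; auto. zt. }
  assert (nz1 : NZ dd a3 X Z W 1%nat = 0).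
  { unfold NZ, sadd, sscal. rewrite q1, !PS_mult_1; auto; ring. }
  assert (nw1 : NW dd X Z W 1%nat = 0).
  { unfold NW. rewrite PS_mult_1; auto. zt. }
  assert (R1 := rec_all dd c2 c3 a3 g 1 ltac:(lia)).
  fold X Y Z W in R1. simpl Nat.eqb in R1. cbv zeta in R1.
  destruct R1 as (x1 & y1 & z1 & w1).
  rewrite nx1 in x1. rewrite nz1 in z1. rewrite nw1 in w1.
  replace (0 / INR 1) with 0 in x1 by (unfold Rdiv; ring).
  replace (0 / (INR 1 - 2)) with 0 in z1, w1 by (unfold Rdiv; ring).
  assert (R2 := rec_all dd c2 c3 a3 g 2 ltac:(lia)).
  fold X Y Z W in R2. simpl Nat.eqb in R2. cbv zeta in R2.
  destruct R2 as (x2 & y2 & z2 & w2).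
  assert (q1' : Qs dd X Z 1%nat = 0) by exact q1.
  assert (nz2 : NZ dd a3 X Z W 2%nat = 0).
  { unfold NZ, sadd, sscal. rewrite !PS_mult_2 by (rewrite ?q0, ?x0, ?y0, ?z0, ?w0; ring).
    rewrite q1. unfold Qs, sadd, sscal. rewrite !PS_mult_2 by (rewrite ?q0, ?x0, ?y0, ?z0, ?w0; ring).
    rewrite x1, z1, w1. ring. }
  assert (nw2 : NW dd X Z W 2%nat = 0).
  { unfold NW. rewrite PS_mult_2; auto. rewrite w1. ring. zt. }
  split; [|split; [|split; [|split]]].
  - intros k. destruct k as [|k]. { rewrite x0, nx0. ring. }
    destruct (rec_all dd c2 c3 a3 g (S k) ltac:(lia)) as (h & _).
    fold X Y Z W in h. rewrite h. field. assert (h1 := INR_ge1 (S k) ltac:(lia)). lra.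
  - intros k. destruct k as [|[|k]].
    + rewrite y0, ny0. ring.
    + rewrite y1, ny1. simpl. ring.
    + destruct (rec_all dd c2 c3 a3 g (S (S k)) ltac:(lia)) as (_ & h & _).
      fold X Y Z W in h. simpl Nat.eqb in h. rewrite h. field.
      rewrite !S_INR. assert (0 <= INR k) by apply pos_INR. lra.
  - intros k. destruct k as [|[|[|k]]].
    + rewrite z0, nz0. ring.
    + rewrite z1, nz1. ring.
    + rewrite nz2. simpl. ring.
    + destruct (rec_all dd c2 c3 a3 g (S (S (S k))) ltac:(lia)) as (_ & _ & h & _).
      fold X Y Z W in h. simpl Nat.eqb in h. rewrite h. field.
      rewrite !S_INR. assert (0 <= INR k) by apply pos_INR. lra.
  - intros k. destruct k as [|[|[|k]]].
    + rewrite w0, nw0. ring.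
    + rewrite w1, nw1. ring.
    + rewrite nw2. simpl. ring.
    + destruct (rec_all dd c2 c3 a3 g (S (S (S k))) ltac:(lia)) as (_ & _ & _ & h).
      fold X Y Z W in h. simpl Nat.eqb in h. rewrite h. field.
      rewrite !S_INR. assert (0 <= INR k) by apply pos_INR. lra.
  - repeat split; auto.
Qed.

Lemma div_le N D : 1 <= Rabs D -> Rabs (N / D) <= Rabs N.
Proof.
  intros H. unfold Rdiv. rewrite Rabs_mult, Rabs_inv.
  assert (0 < Rabs D) by lra.
  assert (/ Rabs D <= 1). { rewrite <- Rinv_1. apply Rinv_le_contravar; lra. }
  assert (0 <= Rabs N) by apply Rabs_pos. nra.
Qed.

Lemma N_bounds M dd c2 c3 a3 k X Y Z W al :
  0 <= M -> 0 <= al ->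
  X 0%nat = 0 -> Y 0%nat = 0 -> Z 0%nat = 0 -> W 0%nat = 0 ->
  Bk M k X al -> Bk M k Y al -> Bk M k Z al -> Bk M k W al ->
  let CQ := Rabs dd * (8 * al * al) + 8 * al * al in
  Rabs (NX dd c2 c3 X Y Z W k) <= (8 * al * (CQ + 2 * al) + (Rabs c2 * (8 * al * al) + Rabs c3 * (8 * al * al))) * mm M k /\
  Rabs (NY dd X Y Z k) <= (8 * al * (CQ + 2 * al + al)) * mm M k /\
  Rabs (NZ dd a3 X Z W k) <= ((CQ + 2 * (8 * al * al)) + (8 * al * CQ + Rabs a3 * (8 * al * al))) * mm M k /\
  Rabs (NW dd X Z W k) <= (8 * al * (CQ + 3 * al + 2 * al)) * mm M k.
Proof.
  intros HM Hal x0 y0 z0 w0 bx b_y bz bw CQ.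
  assert (hCQ : 0 <= CQ).
  { unfold CQ. assert (0 <= Rabs dd) by apply Rabs_pos. nra. }
  assert (q0 := Qs_z dd X Z x0 z0).
  assert (bQ : Bk M (S k) (Qs dd X Z) CQ).
  { unfold Qs, CQ. apply Bk_add; [apply Bk_scal|]; apply Bk_mult; auto. }
  assert (bQ' : Bk M k (Qs dd X Z) CQ) by (eapply Bk_mono; [exact HM| |apply Rle_refl|exact bQ]; lia).
  assert (a2 : Rabs 2 = 2) by (rewrite Rabs_pos_eq; lra).
  assert (a3' : Rabs 3 = 3) by (rewrite Rabs_pos_eq; lra).
  assert (am1 : Rabs (-1) = 1) by (unfold Rabs; destruct Rcase_abs; lra).
  assert (am2 : Rabs (-2) = 2) by (unfold Rabs; destruct Rcase_abs; lra).
  assert (amc : Rabs (- c3) = Rabs c3) by apply Rabs_Ropp.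
  repeat split.
  - assert (B : Bk M (S k) (NX dd c2 c3 X Y Z W) (8 * al * (CQ + Rabs 2 * al) + (Rabs c2 * (8 * al * al) + Rabs (-c3) * (8 * al * al)))).
    { unfold NX. apply Bk_add.
      - apply Bk_mult; auto; [nra| zt| ]. apply Bk_add; auto. apply Bk_scal; auto.
      - apply Bk_add; apply Bk_scal; apply Bk_mult; auto. }
    rewrite a2, amc in B. apply B. lia.
  - assert (B : Bk M (S k) (NY dd X Y Z) (8 * al * (CQ + Rabs 2 * al + Rabs (-1) * al))).
    { unfold NY. apply Bk_mult; auto; [nra| zt| ]. apply Bk_add; [apply Bk_add|]; auto; apply Bk_scal; auto. }
    rewrite a2, am1, Rmult_1_l in B. apply B. lia.
  - assert (B : Bk M (S k) (NZ dd a3 X Z W) ((CQ + Rabs 2 * (8 * al * al)) + (8 * al * CQ + Rabs a3 * (8 * al * al)))).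
    { unfold NZ. apply Bk_add; apply Bk_add; auto.
      - apply Bk_scal. apply Bk_mult; auto.
      - apply Bk_mult; auto.
      - apply Bk_scal. apply Bk_mult; auto. }
    rewrite a2 in B. apply B. lia.
  - assert (B : Bk M (S k) (NW dd X Z W) (8 * al * (CQ + Rabs 3 * al + Rabs (-2) * al))).
    { unfold NW. apply Bk_mult; auto; [nra| zt| ]. apply Bk_add; [apply Bk_add|]; auto; apply Bk_scal; auto. }
    rewrite a3', am2 in B. apply B. lia.
Qed.

Definition Kc dd c2 c3 a3 := 72 * (Rabs dd + 1) + 40 + 8 * Rabs c2 + 8 * Rabs c3 + 8 * Rabs a3 + 1.
Definition alc dd c2 c3 a3 := / Kc dd c2 c3 a3.
Definition Mc dd c2 c3 a3 g := 9 * (1 + Rabs g) * Kc dd c2 c3 a3.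

Lemma Bk_S M k a A : Bk M k a A -> Rabs (a k) <= A * mm M k -> Bk M (S k) a A.
Proof. intros H h i Hi. destruct (Nat.eq_dec i k) as [->|n]; auto. apply H. lia. Qed.

Lemma coef_bounds dd c2 c3 a3 g :
  let X := cX dd c2 c3 a3 g in let Y := cY dd c2 c3 a3 g in
  let Z := cZ dd c2 c3 a3 g in let W := cW dd c2 c3 a3 g in
  let al := alc dd c2 c3 a3 in let M := Mc dd c2 c3 a3 g in
  forall k, Rabs (X k) <= al * mm M k /\ Rabs (Y k) <= al * mm M k /\
            Rabs (Z k) <= al * mm M k /\ Rabs (W k) <= al * mm M k.
Proof.
  intros X Y Z W al M.
  set (K := Kc dd c2 c3 a3).
  assert (hd := Rabs_pos dd). assert (h2 := Rabs_pos c2). assert (h3 := Rabs_pos c3).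
  assert (ha := Rabs_pos a3). assert (hg := Rabs_pos g).
  assert (hK : 1 <= K) by (unfold K, Kc; lra).
  assert (hal : 0 < al) by (unfold al, alc; fold K; apply Rinv_0_lt_compat; lra).
  assert (halK : al * K = 1) by (unfold al, alc; fold K; field; lra).
  assert (hal1 : al <= 1) by nra.
  assert (hM : 0 <= M) by (unfold M, Mc; fold K; nra).
  destruct (idents dd c2 c3 a3 g) as (iX & iY & iZ & iW & y1 & z2 & w2 & x1 & z1 & w1).
  fold X Y Z W in iX, iY, iZ, iW, y1, z2, w2, x1, z1, w1.
  destruct (c_0 dd c2 c3 a3 g) as (x0 & y0 & z0 & w0).
  fold X in x0; fold Y in y0; fold Z in z0; fold W in w0.
  assert (main : forall n, Bk M n X al /\ Bk M n Y al /\ Bk M n Z al /\ Bk M n W al).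
  { induction n as [|k IH].
    - repeat split; intros i Hi; lia.
    - destruct IH as (bx & b_y & bz & bw).
      destruct (N_bounds M dd c2 c3 a3 k X Y Z W al hM ltac:(lra) x0 y0 z0 w0 bx b_y bz bw)
        as (nX & nY & nZ & nW).
      set (CQ := Rabs dd * (8 * al * al) + 8 * al * al) in *.
      assert (hmm : 0 <= mm M k) by (apply mm_pos; lra).
      assert (eQ : CQ = al * al * (8 * (Rabs dd + 1))) by (unfold CQ; ring).
      assert (cX_ : 8 * al * (CQ + 2 * al) + (Rabs c2 * (8 * al * al) + Rabs c3 * (8 * al * al)) <= al).
      { rewrite eQ. apply Rle_trans with (al * al * K); [|rewrite Rmult_assoc, halK; lra].
        assert (S : al * (64 * (Rabs dd + 1)) + 16 + 8 * Rabs c2 + 8 * Rabs c3 <= K) by (unfold K, Kc; nra).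
        assert (0 <= al * al) by nra.
        replace (8 * al * (al * al * (8 * (Rabs dd + 1)) + 2 * al) + (Rabs c2 * (8 * al * al) + Rabs c3 * (8 * al * al)))
          with (al * al * (al * (64 * (Rabs dd + 1)) + 16 + 8 * Rabs c2 + 8 * Rabs c3)) by ring.
        apply Rmult_le_compat_l; lra. }
      assert (cY_ : 8 * al * (CQ + 2 * al + al) <= al).
      { rewrite eQ. apply Rle_trans with (al * al * K); [|rewrite Rmult_assoc, halK; lra].
        assert (S : al * (64 * (Rabs dd + 1)) + 24 <= K) by (unfold K, Kc; nra).
        assert (0 <= al * al) by nra.
        replace (8 * al * (al * al * (8 * (Rabs dd + 1)) + 2 * al + al))
          with (al * al * (al * (64 * (Rabs dd + 1)) + 24)) by ring.
        apply Rmult_le_compat_l; lra. }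
      assert (cZ_ : (CQ + 2 * (8 * al * al)) + (8 * al * CQ + Rabs a3 * (8 * al * al)) <= al).
      { rewrite eQ. apply Rle_trans with (al * al * K); [|rewrite Rmult_assoc, halK; lra].
        assert (S : 8 * (Rabs dd + 1) + 16 + al * (64 * (Rabs dd + 1)) + 8 * Rabs a3 <= K) by (unfold K, Kc; nra).
        assert (0 <= al * al) by nra.
        replace ((al * al * (8 * (Rabs dd + 1)) + 2 * (8 * al * al)) + (8 * al * (al * al * (8 * (Rabs dd + 1))) + Rabs a3 * (8 * al * al)))
          with (al * al * (8 * (Rabs dd + 1) + 16 + al * (64 * (Rabs dd + 1)) + 8 * Rabs a3)) by ring.
        apply Rmult_le_compat_l; lra. }
      assert (cW_ : 8 * al * (CQ + 3 * al + 2 * al) <= al).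
      { rewrite eQ. apply Rle_trans with (al * al * K); [|rewrite Rmult_assoc, halK; lra].
        assert (S : al * (64 * (Rabs dd + 1)) + 40 <= K) by (unfold K, Kc; nra).
        assert (0 <= al * al) by nra.
        replace (8 * al * (al * al * (8 * (Rabs dd + 1)) + 3 * al + 2 * al))
          with (al * al * (al * (64 * (Rabs dd + 1)) + 40)) by ring.
        apply Rmult_le_compat_l; lra. }
      assert (halM : al * M = 9 * (1 + Rabs g)) by (unfold M, Mc; fold K; transitivity (9 * (1 + Rabs g) * (al * K)); [ring| rewrite halK; ring]).
      assert (hM9 : 9 <= M) by (unfold M, Mc; fold K; nra).
      assert (m1 : mm M 1 = M / 4) by (unfold mm; simpl; field).
      assert (m2 : mm M 2 = M * M / 9) by (unfold mm; simpl; field).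
      assert (Y1b : 1 <= al * mm M 1) by (rewrite m1; nra).
      assert (Y2b : 1 + Rabs g <= al * mm M 2) by (rewrite m2; nra).
      destruct (Nat.eq_dec k 0) as [->|k0].
      { repeat split; apply Bk_S; auto; rewrite ?x0, ?y0, ?z0, ?w0, Rabs_R0;
          apply Rmult_le_pos; try lra; apply mm_pos; lra. }
      assert (hk1 := INR_ge1 k ltac:(lia)).
      repeat split; apply Bk_S; auto.
      + replace (X k) with (NX dd c2 c3 X Y Z W k / INR k) by (rewrite <- iX; field; lra).
        eapply Rle_trans; [apply div_le; rewrite Rabs_pos_eq; lra|].
        eapply Rle_trans; [exact nX|]. apply Rmult_le_compat_r; lra.
      + destruct (Nat.eq_dec k 1) as [->|k1].
        { rewrite y1, Rabs_R1. exact Y1b. }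
        assert (hk2 : 2 <= INR k) by (replace 2 with (INR 2) by reflexivity; apply le_INR; lia).
        replace (Y k) with (NY dd X Y Z k / (INR k - 1)) by (rewrite <- (Rplus_0_l (NY _ _ _ _ _)), <- (Rplus_opp_r (Y k)), Rplus_assoc, (Rplus_comm (- Y k)), <- Rplus_assoc, <- iY; field; lra).
        eapply Rle_trans; [apply div_le; rewrite Rabs_pos_eq; lra|].
        eapply Rle_trans; [exact nY|]. apply Rmult_le_compat_r; lra.
      + destruct (Nat.eq_dec k 2) as [->|k2].
        { rewrite z2, Rabs_Ropp. lra. }
        assert (hD : 1 <= Rabs (INR k - 2)).
        { destruct (Nat.eq_dec k 1) as [->|k1].
          - simpl. unfold Rabs; destruct Rcase_abs; lra.
          - assert (3 <= INR k) by (replace 3 with (INR 3) by (simpl; ring); apply le_INR; lia).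
            rewrite Rabs_pos_eq; lra. }
        assert (hD0 : INR k - 2 <> 0) by (intro h; rewrite h, Rabs_R0 in hD; lra).
        replace (Z k) with (NZ dd a3 X Z W k / (INR k - 2)) by (apply (Rmult_eq_reg_r (INR k - 2)); [|exact hD0]; unfold Rdiv; rewrite Rmult_assoc, Rinv_l by exact hD0; specialize (iZ k); lra).
        eapply Rle_trans; [apply div_le; exact hD|].
        eapply Rle_trans; [exact nZ|]. apply Rmult_le_compat_r; lra.
      + destruct (Nat.eq_dec k 2) as [->|k2].
        { rewrite w2, Rabs_R1. lra. }
        assert (hD : 1 <= Rabs (INR k - 2)).
        { destruct (Nat.eq_dec k 1) as [->|k1].
          - simpl. unfold Rabs; destruct Rcase_abs; lra.
          - assert (3 <= INR k) by (replace 3 with (INR 3) by (simpl; ring); apply le_INR; lia).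
            rewrite Rabs_pos_eq; lra. }
        assert (hD0 : INR k - 2 <> 0) by (intro h; rewrite h, Rabs_R0 in hD; lra).
        replace (W k) with (NW dd X Z W k / (INR k - 2)) by (apply (Rmult_eq_reg_r (INR k - 2)); [|exact hD0]; unfold Rdiv; rewrite Rmult_assoc, Rinv_l by exact hD0; specialize (iW k); lra).
        eapply Rle_trans; [apply div_le; exact hD|].
        eapply Rle_trans; [exact nW|]. apply Rmult_le_compat_r; lra. }
  intros k. destruct (main (S k)) as (a & b & c & d').
  repeat split; [apply a|apply b|apply c|apply d']; lia.
Qed.

Lemma G_radius M a A : 0 < M -> 0 <= A -> G M a A -> Rbar_le (/ M) (CV_radius a).
Proof.
  intros HM HA Ha. destruct (CV_radius_bounded a) as [ub _].
  apply ub. exists A. intros n.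
  rewrite Rabs_mult, <- RPow_abs, Rabs_inv, (Rabs_pos_eq M) by lra.
  eapply Rle_trans. { apply Rmult_le_compat_r; [apply pow_le; left; apply Rinv_0_lt_compat; lra| apply Ha]. }
  unfold mm. rewrite pow_inv.
  assert (0 <= INR n) by apply pos_INR.
  assert (0 < M ^ n) by (apply pow_lt; lra).
  replace (A * (M ^ n / (INR n + 1) ^ 2) * / M ^ n) with (A / (INR n + 1) ^ 2) by (field; lra).
  unfold Rdiv. rewrite <- (Rmult_1_r A) at 2. apply Rmult_le_compat_l; [lra|].
  rewrite <- Rinv_1. apply Rinv_le_contravar; [lra|].
  replace 1 with (1 ^ 2) by ring. apply pow_incr; lra.
Qed.

Lemma G_rad M a A r : 0 < M -> 0 <= A -> G M a A -> Rabs r < / M ->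
  Rbar_lt (Rabs r) (CV_radius a).
Proof.
  intros. eapply Rbar_lt_le_trans; [|apply (G_radius M a A); auto]. simpl. exact H2.
Qed.

Definition Gx M a := exists A, 0 <= A /\ G M a A.

Lemma Gx_add M a b : 0 <= M -> Gx M a -> Gx M b -> Gx M (sadd a b).
Proof. intros HM [A [hA Ha]] [B [hB Hb]]. exists (A + B). split; [lra| apply G_add; auto]. Qed.
Lemma Gx_scal M a c : Gx M a -> Gx M (sscal c a).
Proof. intros [A [hA Ha]]. exists (Rabs c * A). split; [apply Rmult_le_pos; auto; apply Rabs_pos| apply G_scal; auto]. Qed.
Lemma Gx_mult M a b : 0 <= M -> Gx M a -> Gx M b -> Gx M (PS_mult a b).
Proof. intros HM [A [hA Ha]] [B [hB Hb]]. exists (8 * A * B). split; [nra| apply G_mult; auto]. Qed.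

Lemma Gx_rad M a r : 0 < M -> Gx M a -> Rabs r < / M -> Rbar_lt (Rabs r) (CV_radius a).
Proof. intros HM [A [hA Ha]] Hr. eapply G_rad; eauto. Qed.

Lemma ev_add M a b r : 0 < M -> Gx M a -> Gx M b -> Rabs r < / M ->
  PSeries (sadd a b) r = PSeries a r + PSeries b r.
Proof.
  intros. rewrite <- PSeries_plus.
  - apply PSeries_ext. intros; reflexivity.
  - apply CV_radius_inside. eapply Gx_rad; eauto.
  - apply CV_radius_inside. eapply Gx_rad; eauto.
Qed.

Lemma ev_scal a c r : PSeries (sscal c a) r = c * PSeries a r.
Proof. rewrite <- PSeries_scal. apply PSeries_ext. intros; reflexivity. Qed.

Lemma ev_mult M a b r : 0 < M -> Gx M a -> Gx M b -> Rabs r < / M ->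
  PSeries (PS_mult a b) r = PSeries a r * PSeries b r.
Proof. intros. apply PSeries_mult; eapply Gx_rad; eauto. Qed.

Lemma deriv_ps M a c t : 0 < M -> Gx M a -> Rabs (c * exp t) < / M ->
  is_derive (fun s => PSeries a (c * exp s)) t (PSeries (fun n => INR n * a n) (c * exp t)).
Proof.
  intros HM Ha Hr.
  assert (H1 := is_derive_PSeries a (c * exp t) (Gx_rad M a _ HM Ha Hr)).
  assert (H2 : is_derive (fun s => c * exp s) t (c * exp t)) by (apply is_derive_scal, is_derive_exp).
  assert (H3 := is_derive_comp (PSeries a) (fun s => c * exp s) t _ _ H1 H2).
  simpl in H3. 
  replace (PSeries (fun n => INR n * a n) (c * exp t)) with (scal (c * exp t) (PSeries (PS_derive a) (c * exp t))).
  - exact H3.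
  - unfold scal; simpl. unfold mult; simpl.
    rewrite <- (PSeries_incr_1 (PS_derive a)).
    apply PSeries_ext. intros [|n].
    + simpl. unfold zero; simpl. ring.
    + unfold PS_incr_1, PS_derive. reflexivity.
Qed.

Lemma geom_ps b C M r : 0 <= C -> 0 <= r -> 0 <= M -> M * r <= 1/2 ->
  (forall k, Rabs (b k) <= C * M ^ k) -> Rabs (PSeries b r) <= 2 * C.
Proof.
  intros hC hr hM hMr Hb.
  assert (hq : Rabs (M * r) < 1) by (rewrite Rabs_pos_eq; nra).
  assert (ex : ex_series (fun n => C * (M * r) ^ n)).
  { assert (h := ex_series_scal_l C _ (ex_series_geom (M * r) hq)). exact h. }
  assert (le : forall n, 0 <= Rabs (b n * r ^ n) <= C * (M * r) ^ n).
  { intros n. split; [apply Rabs_pos|]. rewrite Rabs_mult, <- RPow_abs, (Rabs_pos_eq r) by lra.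
    rewrite Rpow_mult_distr, <- Rmult_assoc. apply Rmult_le_compat_r; [apply pow_le; lra| apply Hb]. }
  assert (exa : ex_series (fun n => Rabs (b n * r ^ n))).
  { apply (@ex_series_le R_AbsRing R_CompleteNormedModule _ (fun n => C * (M * r) ^ n)); auto.
    intros n. unfold norm; simpl. rewrite Rabs_Rabsolu. apply le. }
  unfold PSeries. eapply Rle_trans; [apply Series_Rabs; exact exa|].
  eapply Rle_trans; [apply Series_le; [exact le| exact ex]|].
  rewrite Series_scal_l, Series_geom by exact hq.
  assert (/ (1 - M * r) <= 2).
  { replace 2 with (/ (1/2)) by field. apply Rinv_le_contravar; lra. }
  nra.
Qed.

Lemma mm_le M k : 0 <= M -> mm M k <= M ^ k.
Proof.
  intros hM. unfold mm. assert (0 <= INR k) by apply pos_INR.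
  assert (0 <= M ^ k) by (apply pow_le; lra).
  unfold Rdiv. rewrite <- (Rmult_1_r (M ^ k)) at 2. apply Rmult_le_compat_l; [lra|].
  rewrite <- Rinv_1. apply Rinv_le_contravar; [lra|].
  replace 1 with (1 ^ 2) by ring. apply pow_incr; lra.
Qed.

Lemma tail_exp a M al r : 1 <= M -> 0 <= al <= 1 -> G M a al -> 0 < r -> M * r <= 1/2 ->
  exists S2 S3,
    PSeries a r = a 0%nat + a 1%nat * r + r ^ 2 * S2 /\ Rabs S2 <= 2 * M ^ 2 /\
    PSeries a r = a 0%nat + a 1%nat * r + a 2%nat * r ^ 2 + r ^ 3 * S3 /\ Rabs S3 <= 2 * M ^ 3.
Proof.
  intros hM hal Ha hr hMr.
  assert (hrM : Rabs r < / M).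
  { rewrite Rabs_pos_eq by lra. apply (Rmult_lt_reg_l M); [lra|]. rewrite Rinv_r by lra. lra. }
  assert (Gx1 : Gx M a) by (exists al; split; [lra|auto]).
  assert (rad := Gx_rad M a r ltac:(lra) Gx1 hrM).
  assert (rad1 : Rbar_lt (Rabs r) (CV_radius (PS_decr_1 a))) by (rewrite CV_radius_decr_1; auto).
  assert (rad2 : Rbar_lt (Rabs r) (CV_radius (PS_decr_1 (PS_decr_1 a)))) by (rewrite !CV_radius_decr_1; auto).
  assert (e1 := PSeries_decr_1 a r (CV_radius_inside _ _ rad)).
  assert (e2 := PSeries_decr_1 _ r (CV_radius_inside _ _ rad1)).
  assert (e3 := PSeries_decr_1 _ r (CV_radius_inside _ _ rad2)).
  set (S2 := PSeries (PS_decr_1 (PS_decr_1 a)) r) in *.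
  set (S3 := PSeries (PS_decr_1 (PS_decr_1 (PS_decr_1 a))) r) in *.
  exists S2, S3.
  assert (b : forall j k, Rabs (a (j + k)%nat) <= M ^ j * M ^ k).
  { intros j k. rewrite <- pow_add. eapply Rle_trans; [apply Ha|].
    assert (h := mm_le M (j + k) ltac:(lra)). assert (0 <= mm M (j+k)) by (apply mm_pos; lra). nra. }
  assert (pM : forall j, 0 <= M ^ j) by (intros; apply pow_le; lra).
  repeat split.
  - rewrite e1, e2. unfold PS_decr_1. simpl. ring.
  - apply geom_ps with M; try lra; auto. intros k. apply (b 2%nat k).
  - rewrite e1, e2, e3. unfold PS_decr_1. simpl. ring.
  - apply geom_ps with M; try lra; auto. intros k. apply (b 3%nat k).
Qed.

Lemma ratio1 u v : Rabs u <= 1/2 -> Rabs ((1 + v) / (1 + u) ^ 2 - 1) <= 4 * (Rabs v + 3 * Rabs u).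
Proof.
  intros hu.
  assert (hu' : -1/2 <= u <= 1/2) by (unfold Rabs in hu; destruct Rcase_abs; lra).
  assert (hD : 1/4 <= (1 + u) ^ 2) by nra.
  replace ((1 + v) / (1 + u) ^ 2 - 1) with ((v - 2 * u - u * u) / (1 + u) ^ 2) by (field; lra).
  unfold Rdiv. rewrite Rabs_mult, Rabs_inv, (Rabs_pos_eq ((1+u)^2)) by lra.
  assert (hi : / (1 + u) ^ 2 <= 4).
  { replace 4 with (/ (1/4)) by field. apply Rinv_le_contravar; lra. }
  assert (hN : Rabs (v - 2 * u - u * u) <= Rabs v + 3 * Rabs u).
  { assert (Rabs (u * u) <= Rabs u) by (rewrite Rabs_mult; assert (0 <= Rabs u) by apply Rabs_pos; nra).
    unfold Rminus. eapply Rle_trans; [apply Rabs_triang|]. rewrite Rabs_Ropp.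
    eapply Rle_trans; [apply Rplus_le_compat_r, Rabs_triang|]. rewrite Rabs_Ropp, Rabs_mult.
    replace (Rabs 2) with 2 by (rewrite Rabs_pos_eq; lra). lra. }
  assert (0 <= Rabs (v - 2 * u - u * u)) by apply Rabs_pos.
  assert (0 <= / (1 + u) ^ 2) by (left; apply Rinv_0_lt_compat; lra).
  nra.
Qed.

Lemma ratio2 u w g : Rabs u <= 1/2 ->
  Rabs ((g - w) / (1 + u) ^ 2 - g) <= 4 * (Rabs w + 3 * Rabs g * Rabs u).
Proof.
  intros hu.
  assert (hu' : -1/2 <= u <= 1/2) by (unfold Rabs in hu; destruct Rcase_abs; lra).
  assert (hD : 1/4 <= (1 + u) ^ 2) by nra.
  replace ((g - w) / (1 + u) ^ 2 - g) with ((- w - g * (2 * u + u * u)) / (1 + u) ^ 2) by (field; lra).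
  unfold Rdiv. rewrite Rabs_mult, Rabs_inv, (Rabs_pos_eq ((1+u)^2)) by lra.
  assert (hi : / (1 + u) ^ 2 <= 4).
  { replace 4 with (/ (1/4)) by field. apply Rinv_le_contravar; lra. }
  assert (hN : Rabs (- w - g * (2 * u + u * u)) <= Rabs w + 3 * Rabs g * Rabs u).
  { assert (Rabs (2 * u + u * u) <= 3 * Rabs u).
    { eapply Rle_trans; [apply Rabs_triang|]. rewrite !Rabs_mult.
      replace (Rabs 2) with 2 by (rewrite Rabs_pos_eq; lra).
      assert (0 <= Rabs u) by apply Rabs_pos. nra. }
    unfold Rminus. eapply Rle_trans; [apply Rabs_triang|]. rewrite !Rabs_Ropp, Rabs_mult.
    assert (0 <= Rabs g) by apply Rabs_pos. nra. }
  assert (0 <= Rabs (- w - g * (2 * u + u * u))) by apply Rabs_pos.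
  assert (0 <= / (1 + u) ^ 2) by (left; apply Rinv_0_lt_compat; lra).
  nra.
Qed.

Lemma sqrt3_le a b e : sqrt (a ^ 2 + b ^ 2 + e ^ 2) <= Rabs a + Rabs b + Rabs e.
Proof.
  assert (ha := Rabs_pos a). assert (hb := Rabs_pos b). assert (he := Rabs_pos e).
  rewrite <- (sqrt_pow2 (Rabs a + Rabs b + Rabs e)) by lra.
  apply sqrt_le_1_alt.
  rewrite <- (pow2_abs a), <- (pow2_abs b), <- (pow2_abs e). nra.
Qed.

Ltac gx := repeat first [ assumption | apply Gx_add | apply Gx_scal | apply Gx_mult | lra ].
Ltac evs M := repeat first [ rewrite (ev_add M) by gx | rewrite (ev_mult M) by gx | rewrite ev_scal ].

Lemma evals M dd c2 c3 a3 X Y Z W r : 0 < M -> Gx M X -> Gx M Y -> Gx M Z -> Gx M W -> Rabs r < / M ->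
  let x := PSeries X r in let y := PSeries Y r in let z := PSeries Z r in let w := PSeries W r in
  PSeries (NX dd c2 c3 X Y Z W) r = x * ((dd * (x * x) + z * z) + 2 * z) + (c2 * (y * y) + - c3 * (w * w)) /\
  PSeries (NY dd X Y Z) r = y * ((dd * (x * x) + z * z) + 2 * z + -1 * x) /\
  PSeries (NZ dd a3 X Z W) r = (dd * (x * x) + z * z) + 2 * (z * z) + (z * (dd * (x * x) + z * z) + a3 * (w * w)) /\
  PSeries (NW dd X Z W) r = w * ((dd * (x * x) + z * z) + 3 * z + -2 * x).
Proof.
  intros HM gX gY gZ gW hr x y z w.
  assert (hM : 0 <= M) by lra.
  unfold NX, NY, NZ, NW, Qs.
  repeat split; evs M; reflexivity.
Qed.

Theorem corollary3p2 (d : nat) (q : R) (hd : (0 < d)%nat) (gamma : R) :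
  exists (T : R) (X Y Z W : R -> R),
    0 < T /\
    solves_S d q T X Y Z W /\
    (forall t, t < T -> 0 < Y t) /\
    bounded_at_minus_infty
      (fun t => exp (-2 * t) * sqrt ((X t) ^ 2 + (Z t - 1) ^ 2 + (W t) ^ 2)) /\
    bounded_at_minus_infty (fun t => exp (- t) * Rabs (Y t)) /\
    limit_at_minus_infty (fun t => W t / (Y t) ^ 2) 1 /\
    limit_at_minus_infty (fun t => (1 - Z t) / (Y t) ^ 2) gamma.
Proof.
  pose (dd := INR d). pose (c2 := A2 d / INR d). pose (c3 := 2 * (A3 d q / INR d)). pose (a3 := A3 d q).
  pose (X := cX dd c2 c3 a3 gamma). pose (Y := cY dd c2 c3 a3 gamma).
  pose (Z := cZ dd c2 c3 a3 gamma). pose (W := cW dd c2 c3 a3 gamma).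
  pose (al := alc dd c2 c3 a3). pose (M := Mc dd c2 c3 a3 gamma).
  destruct (idents dd c2 c3 a3 gamma) as (iX & iY & iZ & iW & y1 & z2 & w2 & x1 & z1 & w1).
  fold X Y Z W in iX, iY, iZ, iW, y1, z2, w2, x1, z1, w1.
  destruct (c_0 dd c2 c3 a3 gamma) as (x0 & y0 & z0 & w0).
  fold X in x0; fold Y in y0; fold Z in z0; fold W in w0.
  assert (bnd := coef_bounds dd c2 c3 a3 gamma). fold X Y Z W al M in bnd.
  assert (GX : G M X al) by (intro k; apply bnd).
  assert (GY : G M Y al) by (intro k; apply bnd).
  assert (GZ : G M Z al) by (intro k; apply bnd).
  assert (GW : G M W al) by (intro k; apply bnd).
  set (K := Kc dd c2 c3 a3).
  assert (hK : 1 <= K).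
  { unfold K, Kc. assert (h1 := Rabs_pos dd). assert (h2 := Rabs_pos c2).
    assert (h3 := Rabs_pos c3). assert (h4 := Rabs_pos a3). lra. }
  assert (hal : 0 < al) by (unfold al, alc; fold K; apply Rinv_0_lt_compat; lra).
  assert (halK : al * K = 1) by (unfold al, alc; fold K; field; lra).
  assert (hal1 : al <= 1) by nra.
  assert (hM9 : 9 <= M) by (unfold M, Mc; fold K; assert (h := Rabs_pos gamma); nra).
  assert (gX : Gx M X) by (exists al; split; [lra| auto]).
  assert (gY : Gx M Y) by (exists al; split; [lra| auto]).
  assert (gZ : Gx M Z) by (exists al; split; [lra| auto]).
  assert (gW : Gx M W) by (exists al; split; [lra| auto]).
  pose (c := / (12 * M ^ 3)).
  assert (hM3 : 729 <= M ^ 3) by (simpl; nra).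
  assert (hc : 0 < c) by (unfold c; apply Rinv_0_lt_compat; lra).
  assert (key : forall t, t < 1 -> 0 < c * exp t /\ M * (c * exp t) <= 1/2 /\
     Rabs (c * exp t) < / M /\ c * exp t <= 1 /\ 2 * M ^ 2 * (c * exp t) <= 1/2).
  { intros t ht.
    assert (he := exp_pos t). assert (he1 : exp t < 3) by (assert (h := exp_increasing t 1 ht); assert (h' := exp_le_3); lra).
    assert (hr : c * exp t < 3 * c) by nra.
    assert (e3 : 3 * c * (4 * M ^ 3) = 1) by (unfold c; field; lra).
    assert (hr0 : 0 < c * exp t) by nra.
    assert (m2 : M * M <= M ^ 3) by (simpl; nra).
    repeat split.
    - exact hr0.
    - nra.
    - rewrite Rabs_pos_eq by lra. apply (Rmult_lt_reg_l M); [lra|]. rewrite Rinv_r by lra. nra.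
    - nra.
    - simpl. nra. }
  exists 1, (fun t => PSeries X (c * exp t)), (fun t => PSeries Y (c * exp t)),
    (fun t => 1 + PSeries Z (c * exp t)), (fun t => PSeries W (c * exp t)).
  split; [lra|].
  assert (hr3 : forall t, t < 1 -> 2 * M ^ 3 * (c * exp t) <= 1/2).
  { intros t ht. assert (he := exp_pos t).
    assert (he1 : exp t < 3) by (assert (h := exp_increasing t 1 ht); assert (h' := exp_le_3); lra).
    assert (e3 : 3 * c * (4 * M ^ 3) = 1) by (unfold c; field; lra). nra. }
  split.
  { intros t ht. destruct (key t ht) as (r0 & rM & rR & r1 & r2).
    destruct (evals M dd c2 c3 a3 X Y Z W (c * exp t) ltac:(lra) gX gY gZ gW rR) as (eX & eY & eZ & eW).
    cbv zeta in eX, eY, eZ, eW.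
    set (r := c * exp t) in *.
    repeat split; apply is_derive_Reals.
    - replace (FX d q (PSeries X r) (PSeries Y r) (1 + PSeries Z r) (PSeries W r))
        with (PSeries (fun n => INR n * X n) r).
      + apply (deriv_ps M); auto; lra.
      + rewrite (PSeries_ext _ (NX dd c2 c3 X Y Z W)) by (intros; apply iX).
        rewrite eX. unfold FX, c2, c3, dd. ring.
    - replace (FY d (PSeries X r) (PSeries Y r) (1 + PSeries Z r))
        with (PSeries (fun n => INR n * Y n) r).
      + apply (deriv_ps M); auto; lra.
      + rewrite (PSeries_ext _ (sadd Y (NY dd X Y Z))) by (intros; apply iY).
        rewrite (ev_add M) by (gx; unfold NY, Qs; gx).
        rewrite eY. unfold FY, dd. ring.
    - replace (FZ d q (PSeries X r) (1 + PSeries Z r) (PSeries W r))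
        with (plus zero (PSeries (fun n => INR n * Z n) r)).
      + apply (is_derive_plus (fun _ => 1) (fun s => PSeries Z (c * exp s))).
        * exact (@is_derive_const R_AbsRing R_NormedModule 1 t).
        * apply (deriv_ps M); auto; lra.
      + unfold plus, zero; simpl.
        rewrite (PSeries_ext _ (sadd (sscal 2 Z) (NZ dd a3 X Z W))) by (intros; apply iZ).
        rewrite (ev_add M) by (gx; unfold NZ, Qs; gx).
        rewrite ev_scal, eZ. unfold FZ, a3, dd. ring.
    - replace (FW d (PSeries X r) (1 + PSeries Z r) (PSeries W r))
        with (PSeries (fun n => INR n * W n) r).
      + apply (deriv_ps M); auto; lra.
      + rewrite (PSeries_ext _ (sadd (sscal 2 W) (NW dd X Z W))) by (intros; apply iW).
        rewrite (ev_add M) by (gx; unfold NW, Qs; gx).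
        rewrite ev_scal, eW. unfold FW, dd. ring. }
  assert (hM1 : 1 <= M) by lra.
  assert (hal' : 0 <= al <= 1) by lra.
  assert (facts : forall t, t < 1 -> exists u sx sz sw,
     PSeries Y (c * exp t) = (c * exp t) * (1 + u) /\ Rabs u <= 2 * M ^ 3 * (c * exp t) /\
     PSeries X (c * exp t) = (c * exp t) ^ 2 * sx /\ Rabs sx <= M ^ 2 + 2 * M ^ 3 /\
     PSeries Z (c * exp t) = (c * exp t) ^ 2 * (- gamma + sz) /\ Rabs sz <= 2 * M ^ 3 * (c * exp t) /\
     PSeries W (c * exp t) = (c * exp t) ^ 2 * (1 + sw) /\ Rabs sw <= 2 * M ^ 3 * (c * exp t)).
  { intros t ht. destruct (key t ht) as (r0 & rM & rR & r1 & r2).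
    set (r := c * exp t) in *.
    assert (m23 : M ^ 2 <= M ^ 3) by (simpl; nra).
    destruct (tail_exp X M al r hM1 hal' GX r0 rM) as (_ & SX & _ & _ & eX & bX).
    destruct (tail_exp Y M al r hM1 hal' GY r0 rM) as (SY & _ & eY & bY & _ & _).
    destruct (tail_exp Z M al r hM1 hal' GZ r0 rM) as (_ & SZ & _ & _ & eZ & bZ).
    destruct (tail_exp W M al r hM1 hal' GW r0 rM) as (_ & SW & _ & _ & eW & bW).
    assert (bX2 : Rabs (X 2%nat) <= M ^ 2).
    { eapply Rle_trans; [apply GX|]. assert (h := mm_le M 2 ltac:(lra)).
      assert (0 <= mm M 2) by (apply mm_pos; lra). nra. }
    exists (r * SY), (X 2%nat + r * SX), (r * SZ), (r * SW).
    rewrite x0, x1 in eX. rewrite y0, y1 in eY. rewrite z0, z1, z2 in eZ. rewrite w0, w1, w2 in eW.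
    repeat split.
    - rewrite eY. ring.
    - rewrite Rabs_mult, Rabs_pos_eq by lra. nra.
    - rewrite eX. ring.
    - eapply Rle_trans; [apply Rabs_triang|]. rewrite Rabs_mult, (Rabs_pos_eq r) by lra. nra.
    - rewrite eZ. ring.
    - rewrite Rabs_mult, Rabs_pos_eq by lra. nra.
    - rewrite eW. ring.
    - rewrite Rabs_mult, Rabs_pos_eq by lra. nra. }
  assert (e2t : forall t, exp (-2 * t) * (exp t) ^ 2 = 1).
  { intros t. simpl. rewrite Rmult_1_r, <- !exp_plus. replace (-2 * t + (t + t)) with 0 by ring. apply exp_0. }
  assert (e1t : forall t, exp (- t) * exp t = 1).
  { intros t. rewrite <- exp_plus. replace (- t + t) with 0 by ring. apply exp_0. }
  split.
  { intros t ht. destruct (key t ht) as (r0 & rM & rR & r1 & r2).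
    destruct (facts t ht) as (u & sx & sz & sw & eY & bu & _).
    rewrite eY. assert (M ^ 2 <= M ^ 3) by (simpl; nra). apply Rmult_lt_0_compat; [lra|].
    assert (hu : Rabs u <= 1/2) by (assert (h := hr3 t ht); lra).
    assert (-1/2 <= u) by (unfold Rabs in hu; destruct Rcase_abs; lra). lra. }
  assert (hg := Rabs_pos gamma).
  split.
  { exists (c ^ 2 * (M ^ 2 + 2 * M ^ 3 + Rabs gamma + 3)), 0. intros t ht.
    destruct (key t ltac:(lra)) as (r0 & rM & rR & r1 & r2).
    destruct (facts t ltac:(lra)) as (u & sx & sz & sw & eY & bu & eX & bx & eZ & bz & eW & bw).
    assert (h3 := hr3 t ltac:(lra)).
    assert (he := exp_pos (-2 * t)).
    replace (1 + PSeries Z (c * exp t) - 1) with (PSeries Z (c * exp t)) by ring.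
    rewrite Rabs_pos_eq by (apply Rmult_le_pos; [lra| apply sqrt_pos]).
    eapply Rle_trans; [apply Rmult_le_compat_l; [lra| apply sqrt3_le]|].
    rewrite eX, eZ, eW, !Rabs_mult, !(Rabs_pos_eq ((c * exp t) ^ 2)) by (apply pow_le; lra).
    assert (Rabs (- gamma + sz) <= Rabs gamma + 1).
    { eapply Rle_trans; [apply Rabs_triang|]. rewrite Rabs_Ropp. lra. }
    assert (Rabs (1 + sw) <= 2).
    { eapply Rle_trans; [apply Rabs_triang|]. rewrite Rabs_R1. lra. }
    assert (E : exp (-2 * t) * (c * exp t) ^ 2 = c ^ 2) by (rewrite Rpow_mult_distr; transitivity (c ^ 2 * (exp (-2 * t) * exp t ^ 2)); [ring| rewrite e2t; ring]).
    assert (0 <= (c * exp t) ^ 2) by (apply pow_le; lra).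
    replace (exp (-2 * t) * ((c * exp t) ^ 2 * Rabs sx + (c * exp t) ^ 2 * Rabs (- gamma + sz) + (c * exp t) ^ 2 * Rabs (1 + sw)))
      with (exp (-2 * t) * (c * exp t) ^ 2 * (Rabs sx + Rabs (- gamma + sz) + Rabs (1 + sw))) by ring.
    rewrite E. apply Rmult_le_compat_l; [apply pow_le; lra| lra]. }
  split.
  { exists (c * (3/2)), 0. intros t ht.
    destruct (key t ltac:(lra)) as (r0 & rM & rR & r1 & r2).
    destruct (facts t ltac:(lra)) as (u & sx & sz & sw & eY & bu & _).
    assert (h3 := hr3 t ltac:(lra)).
    assert (he := exp_pos (- t)).
    rewrite Rabs_pos_eq by (apply Rmult_le_pos; [lra| apply Rabs_pos]).
    rewrite eY, Rabs_mult, (Rabs_pos_eq (c * exp t)) by lra.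
    assert (Rabs (1 + u) <= 3/2).
    { eapply Rle_trans; [apply Rabs_triang|]. rewrite Rabs_R1. lra. }
    replace (exp (- t) * (c * exp t * Rabs (1 + u))) with (c * (exp (- t) * exp t) * Rabs (1 + u)) by ring.
    rewrite e1t, Rmult_1_r. apply Rmult_le_compat_l; lra. }
  assert (hlim : forall eps, 0 < eps -> exists Mt, forall t, t <= Mt ->
     t < 1 /\ 32 * M ^ 3 * (1 + Rabs gamma) * (c * exp t) <= eps / 2).
  { intros eps he. set (dl := eps / (64 * M ^ 3 * (1 + Rabs gamma))).
    assert (hdl : 0 < dl) by (unfold dl; apply Rdiv_lt_0_compat; [lra| nra]).
    exists (Rmin 0 (ln (dl / c))). intros t ht.
    assert (t1 : t <= 0) by (eapply Rle_trans; [exact ht| apply Rmin_l]).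
    assert (t2 : t <= ln (dl / c)) by (eapply Rle_trans; [exact ht| apply Rmin_r]).
    split; [lra|].
    assert (hx : exp t <= dl / c).
    { rewrite <- (exp_ln (dl / c)) by (apply Rdiv_lt_0_compat; lra).
      destruct t2 as [t2|t2]; [left; apply exp_increasing; exact t2| rewrite t2; lra]. }
    assert (hr : c * exp t <= dl).
    { apply Rmult_le_compat_l with (r := c) in hx; [|lra]. 
      replace (c * (dl / c)) with dl in hx by (field; lra). exact hx. }
    assert (0 < 32 * M ^ 3 * (1 + Rabs gamma)) by nra.
    apply Rle_trans with (32 * M ^ 3 * (1 + Rabs gamma) * dl).
    { apply Rmult_le_compat_l; lra. }
    unfold dl. right. field. nra. }
  split.
  { intros eps he. destruct (hlim eps he) as [Mt HMt]. exists Mt. intros t ht.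
    destruct (HMt t ht) as [t1 hb].
    destruct (key t t1) as (r0 & rM & rR & r1 & r2).
    destruct (facts t t1) as (u & sx & sz & sw & eY & bu & eX & bx & eZ & bz & eW & bw).
    assert (h3 := hr3 t t1).
    assert (hu : Rabs u <= 1/2) by lra.
    assert (hu' : -1/2 <= u) by (unfold Rabs in hu; destruct Rcase_abs; lra).
    rewrite eW, eY.
    replace ((c * exp t) ^ 2 * (1 + sw) / (c * exp t * (1 + u)) ^ 2) with ((1 + sw) / (1 + u) ^ 2).
    2:{ field. assert (exp t > 0) by apply exp_pos. repeat split; lra. }
    eapply Rle_lt_trans; [apply ratio1; exact hu|].
    assert (0 <= M ^ 3 * (c * exp t)) by nra.
    nra. }
  { intros eps he. destruct (hlim eps he) as [Mt HMt]. exists Mt. intros t ht.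
    destruct (HMt t ht) as [t1 hb].
    destruct (key t t1) as (r0 & rM & rR & r1 & r2).
    destruct (facts t t1) as (u & sx & sz & sw & eY & bu & eX & bx & eZ & bz & eW & bw).
    assert (h3 := hr3 t t1).
    assert (hu : Rabs u <= 1/2) by lra.
    assert (hu' : -1/2 <= u) by (unfold Rabs in hu; destruct Rcase_abs; lra).
    rewrite eZ, eY.
    replace ((1 - (1 + (c * exp t) ^ 2 * (- gamma + sz))) / (c * exp t * (1 + u)) ^ 2)
      with ((gamma - sz) / (1 + u) ^ 2).
    2:{ field. assert (exp t > 0) by apply exp_pos. repeat split; lra. }
    eapply Rle_lt_trans; [apply ratio2; exact hu|].
    assert (0 <= M ^ 3 * (c * exp t)) by nra.
    assert (Rabs gamma * Rabs u <= Rabs gamma * (2 * M ^ 3 * (c * exp t))) by (apply Rmult_le_compat_l; lra).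
    nra. }
Qed.
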